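(* Let $(L,L_0)$ be a nonlinear primitive Lie superalgebra. Then $L$ is a semisimple Lie superalgebra and $L$ is not the direct sum of two nonzero ideals.
   Context: All Lie superalgebras are finite-dimensional over $\mathbb{C}$. A pair $(L,L_0)$, with $L=L_{\bar 0}\oplus L_{\bar 1}$ a Lie superalgebra and $L_0$ a subalgebra, is called transitive if $L_0$ contains no nonzero ideal of $L$. A transitive pair is nonlinear primitive if (a) $L_0$ is a maximal subalgebra of $L$, and (b) the subspace $L_1=\{x\in L_0 : [x,L]\subset L_0\}$ (the kernel of the isotropy representation of $L_0$ on $L/L_0$) is nonzero. A Lie superalgebra is semisimple if its radical is zero, equivalently if it contains no nonzero abelian ideal. *)

(* Defs.v *)
From HB Require Import structures.
From mathcomp Require Import all_boot all_order all_algebra.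
From mathcomp Require Import reals complex.
Set Implicit Arguments. Unset Strict Implicit. Unset Printing Implicit Defensive.
Import Order.TTheory GRing.Theory Num.Theory.
Local Open Scope ring_scope.

(* A finite-dimensional Lie superalgebra L = L_0bar (+) L_1bar over a field F
   is represented by: a finite-dimensional F-vector space V (vectType),
   two subspaces Vev (even part) and Vod (odd part) with V = Vev (+) Vod,
   and a bracket br : V -> V -> V. *)
Section LieSuper.
Variables (F : fieldType) (V : vectType F).
Variables (Vev Vod : {vspace V}) (br : V -> V -> V).

Definition homog (p : bool) (x : V) : bool :=
  x \in (if p then Vod else Vev).

Definition is_lie_superalgebra : Prop :=
  [/\ (directv (Vev + Vod)%VS /\ (Vev + Vod)%VS = fullv),
      (forall (a : F) (x y z : V),
          (br (a *: x + y) z = a *: br x z + br y z) /\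
          (br z (a *: x + y) = a *: br z x + br z y)),
      (forall p q x y, homog p x -> homog q y -> homog (p (+) q) (br x y)),
      (forall p q x y, homog p x -> homog q y ->
          br x y = - ((-1) ^+ (p && q)) *: br y x) &
      (forall p q x y z, homog p x -> homog q y ->
          br x (br y z) = br (br x y) z + ((-1) ^+ (p && q)) *: br y (br x z))].

Definition graded (A : {vspace V}) : Prop :=
  A = (A :&: Vev + A :&: Vod)%VS.

Definition is_subalg (A : {vspace V}) : Prop :=
  graded A /\ forall x y, x \in A -> y \in A -> br x y \in A.

Definition is_ideal (I : {vspace V}) : Prop :=
  graded I /\ forall x y, y \in I -> br x y \in I.

(* [A, B] : span of all brackets [a, b], a in A, b in B
   (by bilinearity, spanned by brackets of basis vectors) *)
Definition brsp (A B : {vspace V}) : {vspace V} :=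
  <<[seq br x y | x <- vbasis A, y <- vbasis B]>>%VS.

Fixpoint derived (k : nat) (I : {vspace V}) : {vspace V} :=
  if k is k'.+1 then brsp (derived k' I) (derived k' I) else I.

Definition solvable (I : {vspace V}) : Prop := exists k, derived k I = 0%VS.

(* radical (the largest solvable ideal) is zero, i.e. every solvable ideal is 0 *)
Definition semisimple : Prop :=
  forall I, is_ideal I -> solvable I -> I = 0%VS.

Definition transitive_pair (L0 : {vspace V}) : Prop :=
  is_subalg L0 /\ forall I, is_ideal I -> (I <= L0)%VS -> I = 0%VS.

Definition maximal_subalg (L0 : {vspace V}) : Prop :=
  [/\ is_subalg L0, L0 != fullv &
      forall A, is_subalg A -> (L0 <= A)%VS -> A = L0 \/ A = fullv].

Definition L1 (L0 : {vspace V}) (x : V) : Prop :=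
  x \in L0 /\ forall y, br x y \in L0.

Definition nonlinear_primitive (L0 : {vspace V}) : Prop :=
  [/\ transitive_pair L0, maximal_subalg L0 &
      exists x, x != 0 /\ L1 L0 x].

Definition direct_sum_of_two_nonzero_ideals : Prop :=
  exists I J : {vspace V},
    [/\ is_ideal I, is_ideal J, I != 0%VS, J != 0%VS &
        (directv (I + J)%VS) /\ ((I + J)%VS = fullv)].

End LieSuper.

(* Main.v *)
Require Import Defs.
From HB Require Import structures.
From mathcomp Require Import all_boot all_order all_algebra.
From mathcomp Require Import reals complex.
Set Implicit Arguments. Unset Strict Implicit. Unset Printing Implicit Defensive.
Import Order.TTheory GRing.Theory Num.Theory.
Local Open Scope ring_scope.

Section Basics.
Variables (F : fieldType) (V : vectType F).
Variables (Vev Vod : {vspace V}) (br : V -> V -> V).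
Hypothesis HL : is_lie_superalgebra Vev Vod br.

Local Notation hom := (homog Vev Vod).
Local Notation graded := (graded Vev Vod).

Lemma bil a x y z : (br (a *: x + y) z = a *: br x z + br y z) /\
          (br z (a *: x + y) = a *: br z x + br z y).
Proof. by move: HL; rewrite /is_lie_superalgebra; case => _ H _ _ _; apply: H. Qed.

Lemma br0l z : br 0 z = 0.
Proof.
have := (bil 1 0 0 z).1; rewrite !scale1r !addr0 => e.
have : br 0 z + br 0 z - br 0 z = br 0 z - br 0 z by rewrite -e.
by rewrite addrK subrr.
Qed.

Lemma br0r z : br z 0 = 0.
Proof.
have := (bil 1 0 0 z).2; rewrite !scale1r !addr0 => e.
have : br z 0 + br z 0 - br z 0 = br z 0 - br z 0 by rewrite -e.
by rewrite addrK subrr.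
Qed.

Lemma brDl x y z : br (x + y) z = br x z + br y z.
Proof. by have := (bil 1 x y z).1; rewrite !scale1r. Qed.
Lemma brDr x y z : br z (x + y) = br z x + br z y.
Proof. by have := (bil 1 x y z).2; rewrite !scale1r. Qed.
Lemma brZl a x z : br (a *: x) z = a *: br x z.
Proof. by have := (bil a x 0 z).1; rewrite !addr0 br0l addr0. Qed.
Lemma brZr a x z : br z (a *: x) = a *: br z x.
Proof. by have := (bil a x 0 z).2; rewrite !addr0 br0r addr0. Qed.

Definition brl (y : V) := fun x => br x y.
Definition brr (x : V) := fun y => br x y.
Fact brl_lin y : linear (brl y).
Proof. by move=> a u v; rewrite /brl (bil a u v y).1. Qed.
Fact brr_lin x : linear (brr x).
Proof. by move=> a u v; rewrite /brr (bil a u v x).2. Qed.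
HB.instance Definition _ y := GRing.isLinear.Build F V V _ (brl y) (brl_lin y).
HB.instance Definition _ x := GRing.isLinear.Build F V V _ (brr x) (brr_lin x).

Lemma brsuml I (r : seq I) (P : pred I) (f : I -> V) z :
  br (\sum_(i <- r | P i) f i) z = \sum_(i <- r | P i) br (f i) z.
Proof. by have := linear_sum (brl z) r P f. Qed.
Lemma brsumr I (r : seq I) (P : pred I) (f : I -> V) z :
  br z (\sum_(i <- r | P i) f i) = \sum_(i <- r | P i) br z (f i).
Proof. by have := linear_sum (brr z) r P f. Qed.

Lemma homE0 x : hom false x = (x \in Vev). Proof. by []. Qed.
Lemma homE1 x : hom true x = (x \in Vod). Proof. by []. Qed.

Lemma hom_br s r x y : hom s x -> hom r y -> hom (s (+) r) (br x y).
Proof. by move: HL; rewrite /is_lie_superalgebra; case => _ _ H _ _; apply: H. Qed.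

Lemma antisym s r x y : hom s x -> hom r y ->
  br x y = - ((-1) ^+ (s && r)) *: br y x.
Proof. by move: HL; rewrite /is_lie_superalgebra; case => _ _ _ H _; apply: H. Qed.

Lemma jacobi s r x y z : hom s x -> hom r y ->
  br x (br y z) = br (br x y) z + ((-1) ^+ (s && r)) *: br y (br x z).
Proof. by move: HL; rewrite /is_lie_superalgebra; case => _ _ _ _ H; apply: H. Qed.

Lemma decomp x : exists x0 x1, [/\ hom false x0, hom true x1 & x = x0 + x1].
Proof.
move: HL; rewrite /is_lie_superalgebra; case => [[_ full]] _ _ _ _.
have : x \in (Vev + Vod)%VS by rewrite full memvf.
by case/memv_addP=> u Hu [v Hv ->]; exists u, v.
Qed.

Lemma dec_uniq a0 a1 b0 b1 : hom false a0 -> hom true a1 -> hom false b0 ->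
  hom true b1 -> a0 + a1 = b0 + b1 -> a0 = b0 /\ a1 = b1.
Proof.
rewrite !homE0 !homE1 => ha0 ha1 hb0 hb1 e.
move: HL; rewrite /is_lie_superalgebra; case => [[dir _]] _ _ _ _.
have cap0 := directv_addP dir.
have h : a0 - b0 = b1 - a1.
  have -> : a0 = b0 + b1 - a1 by rewrite -e addrK.
  by rewrite addrAC [b0 + b1 - b0]addrC addKr.
have : a0 - b0 \in (Vev :&: Vod)%VS.
  by rewrite memv_cap memvB //= h memvB.
rewrite cap0 memv0 subr_eq0 => /eqP e0; split => //.
by move: e; rewrite e0 => /addrI.
Qed.

Lemma graded_dec (A : {vspace V}) x : graded A -> x \in A ->
  exists x0 x1, [/\ x0 \in A, x1 \in A, hom false x0, hom true x1 & x = x0 + x1].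
Proof.
move=> gA; rewrite {1}gA => /memv_addP[u Hu [v Hv ->]].
move: Hu Hv; rewrite !memv_cap => /andP[uA uE] /andP[vA vO].
by exists u, v.
Qed.

Lemma hom_in (A : {vspace V}) r u : hom r u -> u \in A -> u \in (A :&: Vev + A :&: Vod)%VS.
Proof.
case: r => /= hu uA.
  by apply: (subvP (addvSr _ _)); rewrite memv_cap uA.
by apply: (subvP (addvSl _ _)); rewrite memv_cap uA.
Qed.

Lemma graded_intro (A : {vspace V}) : (A <= A :&: Vev + A :&: Vod)%VS -> graded A.
Proof.
move=> sA; apply/eqP; rewrite eqEsubv sA /=.
by rewrite subv_add !capvSl.
Qed.

Lemma graded_intro2 (A : {vspace V}) :
  (forall x, x \in A -> exists x0 x1,
     [/\ x0 \in A, x1 \in A, hom false x0, hom true x1 & x = x0 + x1]) ->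
  graded A.
Proof.
move=> H; apply: graded_intro; apply/subvP => x /H[x0 [x1 [? ? h0 h1 ->]]].
by rewrite memvD // (hom_in h0, hom_in h1).
Qed.

Lemma comp_in (A : {vspace V}) a0 a1 : graded A -> hom false a0 -> hom true a1 ->
  a0 + a1 \in A -> a0 \in A /\ a1 \in A.
Proof.
move=> gA h0 h1 /(graded_dec gA)[b0 [b1 [? ? hb0 hb1 e]]].
by have [-> ->] := dec_uniq h0 h1 hb0 hb1 e.
Qed.

Lemma graded_cap (A B : {vspace V}) : graded A -> graded B -> graded (A :&: B)%VS.
Proof.
move=> gA gB; apply: graded_intro2 => x; rewrite memv_cap => /andP[xA xB].
have [x0 [x1 [a0 a1 h0 h1 e]]] := graded_dec gA xA.
have [b0 b1] := comp_in gB h0 h1 (eq_ind _ (fun t => t \in B) xB _ e).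
by exists x0, x1; rewrite !memv_cap a0 a1 b0 b1.
Qed.

Lemma graded_add (A B : {vspace V}) : graded A -> graded B -> graded (A + B)%VS.
Proof.
move=> gA gB; apply: graded_intro2 => x /memv_addP[a aA [b bB ->]].
have [a0 [a1 [? ? ha0 ha1 ->]]] := graded_dec gA aA.
have [b0 [b1 [? ? hb0 hb1 ->]]] := graded_dec gB bB.
exists (a0 + b0), (a1 + b1); split.
- by rewrite memv_add.
- by rewrite memv_add.
- by rewrite homE0 memvD.
- by rewrite homE1 memvD.
- by rewrite addrACA.
Qed.

Lemma graded_full : graded fullv.
Proof.
apply: graded_intro2 => x _; have [x0 [x1 [h0 h1 e]]] := decomp x.
by exists x0, x1; rewrite !memvf.
Qed.

Lemma swap_sub (A B C : {vspace V}) : graded A -> graded B ->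
  (forall x y, x \in A -> y \in B -> br x y \in C) ->
  forall x y, x \in A -> y \in B -> br y x \in C.
Proof.
move=> gA gB H x y xA yB.
have [x0 [x1 [? ? hx0 hx1 ->]]] := graded_dec gA xA.
have [y0 [y1 [? ? hy0 hy1 ->]]] := graded_dec gB yB.
have K s r u v : hom s u -> hom r v -> u \in A -> v \in B -> br v u \in C.
  by move=> hu hv uA vB; rewrite (antisym hv hu) memvZ // H.
rewrite !brDl !brDr; apply: memvD; apply: memvD.
- exact: (K false false).
- exact: (K true false).
- exact: (K false true).
- exact: (K true true).
Qed.


Lemma br_in_brsp (A B : {vspace V}) x y : x \in A -> y \in B -> br x y \in brsp br A B.
Proof.
move=> xA yB; rewrite (coord_vbasis xA) (coord_vbasis yB) brsuml.
apply: rpred_sum => i _; rewrite brZl brsumr; apply: memvZ.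
apply: rpred_sum => j _; rewrite brZr; apply: memvZ; apply: memv_span.
by apply: allpairs_f; apply: mem_nth; rewrite size_tuple.
Qed.

Lemma brsp_sub (A B C : {vspace V}) :
  (forall x y, x \in A -> y \in B -> br x y \in C) -> (brsp br A B <= C)%VS.
Proof.
move=> H; apply/span_subvP => w /allpairsP[[x y] [xA yB ->]] /=.
by apply: H; apply: vbasis_mem.
Qed.

Lemma graded_brsp (A B : {vspace V}) : graded A -> graded B -> graded (brsp br A B).
Proof.
move=> gA gB; apply: graded_intro; apply: brsp_sub => x y xA yB.
have [x0 [x1 [? ? hx0 hx1 ->]]] := graded_dec gA xA.
have [y0 [y1 [? ? hy0 hy1 ->]]] := graded_dec gB yB.
have K s r u v : hom s u -> hom r v -> u \in A -> v \in B ->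
    br u v \in (brsp br A B :&: Vev + brsp br A B :&: Vod)%VS.
  by move=> hu hv uA vB; apply: (hom_in (hom_br hu hv)); apply: br_in_brsp.
rewrite !brDl !brDr; apply: memvD; apply: memvD.
- exact: (K false false).
- exact: (K false true).
- exact: (K true false).
- exact: (K true true).
Qed.

Lemma ideal_right (I : {vspace V}) x y : is_ideal Vev Vod br I -> x \in I -> br x y \in I.
Proof.
move=> [gI HI] xI.
exact: (swap_sub (graded_full) gI (fun a b _ bI => HI a b bI) (memvf y) xI).
Qed.

Lemma ideal_brsp (D : {vspace V}) : is_ideal Vev Vod br D ->
  is_ideal Vev Vod br (brsp br D D).
Proof.
move=> iD; have [gD HD] := iD; split; first exact: graded_brsp.
move=> z w wB.
have : (brsp br D D <= linfun (brr z) @^-1: brsp br D D)%VS.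
  apply: brsp_sub => x y xD yD; rewrite -memv_preim lfunE.
  change (br z (br x y) \in brsp br D D).
  have [z0 [z1 [hz0 hz1 ->]]] := decomp z.
  have [x0 [x1 [? ? hx0 hx1 ->]]] := graded_dec gD xD.
  have K s r u v : hom s u -> hom r v -> v \in D -> br u (br v y) \in brsp br D D.
    move=> hu hv vD; rewrite (jacobi y hu hv); apply: memvD.
      by apply: br_in_brsp => //; apply: HD.
    by apply: memvZ; apply: br_in_brsp => //; apply: HD.
  rewrite !brDl !brDr; apply: memvD; apply: memvD.
  - exact: (K false false).
  - exact: (K false true).
  - exact: (K true false).
  - exact: (K true true).
by move/subvP => /(_ w wB); rewrite -memv_preim lfunE.
Qed.

Lemma derived_ideal (I : {vspace V}) k : is_ideal Vev Vod br I ->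
  is_ideal Vev Vod br (derived br k I).
Proof. by move=> iI; elim: k => [|k IH] //=; apply: ideal_brsp. Qed.


Variable L0 : {vspace V}.
Hypothesis NP : nonlinear_primitive Vev Vod br L0.

Lemma L0_sub : is_subalg Vev Vod br L0.
Proof. by move: NP; rewrite /nonlinear_primitive; case=> [[]]. Qed.
Lemma gL0 : graded L0.
Proof. exact: L0_sub.1. Qed.
Lemma L0_br x y : x \in L0 -> y \in L0 -> br x y \in L0.
Proof. exact: L0_sub.2. Qed.
Lemma trans (I : {vspace V}) : is_ideal Vev Vod br I -> (I <= L0)%VS -> I = 0%VS.
Proof. by move: NP; rewrite /nonlinear_primitive; case=> [[_ H]] _ _; apply: H. Qed.
Lemma maxl (A : {vspace V}) : is_subalg Vev Vod br A -> (L0 <= A)%VS -> A = L0 \/ A = fullv.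
Proof. by move: NP; rewrite /nonlinear_primitive; case=> _ [_ _ H] _; apply: H. Qed.
Lemma L1ex : exists x, x != 0 /\ L1 br L0 x.
Proof. by move: NP; rewrite /nonlinear_primitive; case. Qed.

Lemma sum_full (K : {vspace V}) : is_ideal Vev Vod br K -> K != 0%VS -> (L0 + K)%VS = fullv.
Proof.
move=> iK nzK; have [gK HK] := iK.
have sub : is_subalg Vev Vod br (L0 + K)%VS.
  split; first exact: graded_add gL0 gK.
  move=> x y /memv_addP[a aL [k kK ->]] /memv_addP[b bL [k' kK' ->]].
  rewrite !brDl !brDr; apply: memvD; apply: memvD.
  - by apply: (subvP (addvSl _ _)); apply: L0_br.
  - by apply: (subvP (addvSr _ _)); apply: HK.
  - by apply: (subvP (addvSr _ _)); apply: ideal_right.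
  - by apply: (subvP (addvSr _ _)); apply: HK.
case: (maxl sub (addvSl _ _)) => // e.
have : (K <= L0)%VS by rewrite -{1}e addvSr.
by move/(trans iK) => K0; move: nzK; rewrite K0 eqxx.
Qed.

Lemma cap_ideal (K M : {vspace V}) : is_ideal Vev Vod br K -> is_ideal Vev Vod br M ->
  M != 0%VS -> (forall m k, m \in M -> k \in K -> br m k = 0) -> (K :&: L0)%VS = 0%VS.
Proof.
move=> iK iM nzM H; apply: trans; last exact: capvSr.
split; first exact: graded_cap iK.1 gL0.
move=> z y; rewrite memv_cap => /andP[yK yL].
rewrite memv_cap iK.2 //=.
have : z \in (L0 + M)%VS by rewrite sum_full // memvf.
case/memv_addP => a aL [m mM ->].
by rewrite brDl (H m y mM yK) addr0 L0_br.
Qed.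

Definition L1s := (L0 :&: \bigcap_(i < \dim {:V})
   (linfun (brl (vbasis {:V})`_i) @^-1: L0))%VS.

Lemma memL1s x : x \in L1s <-> (x \in L0 /\ forall y, br x y \in L0).
Proof.
split.
  rewrite memv_cap => /andP[xL xC]; split => // y.
  have Hi (i : 'I_(\dim {:V})) : br x (vbasis {:V})`_i \in L0.
    move: xC; rewrite memvE => /subv_bigcapP /(_ i isT).
    by rewrite -memvE -memv_preim lfunE.
  rewrite (coord_vbasis (memvf y)) brsumr; apply: rpred_sum => i _.
  by rewrite brZr memvZ.
case=> xL H; rewrite memv_cap xL /= memvE; apply/subv_bigcapP => i _.
by rewrite -memvE -memv_preim lfunE; apply: H.
Qed.

Lemma key (K : {vspace V}) : is_ideal Vev Vod br K -> K != 0%VS ->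
  (K :&: L0)%VS = 0%VS -> False.
Proof.
move=> iK nzK cap0; have [gK HK] := iK.
have full := sum_full iK nzK.
have [x0 [nx0 [x0L x0C]]] := L1ex.
have wk w k : w \in L1s -> k \in K -> br w k = 0.
  move=> /memL1s[wL wC] kK.
  have : br w k \in (K :&: L0)%VS by rewrite memv_cap HK // wC.
  by rewrite cap0 memv0 => /eqP.
have gL1 : graded L1s.
  apply: graded_intro2 => w /memL1s[wL wC].
  have [w0 [w1 [w0L w1L h0 h1 e]]] := graded_dec gL0 wL.
  have comp y : br w0 y \in L0 /\ br w1 y \in L0.
    have [y0 [y1 [hy0 hy1 ->]]] := decomp y.
    have P r u : hom r u -> br w0 u \in L0 /\ br w1 u \in L0.
      move=> hu; have := wC u; rewrite e brDl.
      case: r hu => hu s.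
        rewrite addrC in s.
        by have [a b] := comp_in gL0 (hom_br h1 hu) (hom_br h0 hu) s.
      exact: comp_in gL0 (hom_br h0 hu) (hom_br h1 hu) s.
    have [a0 a1] := P false y0 hy0; have [b0 b1] := P true y1 hy1.
    by rewrite !brDr; split; apply: memvD.
  exists w0, w1; split => //; apply/memL1s; split => // y.
    exact: (comp y).1.
  exact: (comp y).2.
have iL1 : is_ideal Vev Vod br L1s.
  split => // z w wL1.
  have : z \in (L0 + K)%VS by rewrite full memvf.
  case/memv_addP => a aL [k kK ->].
  have bkw : br k w \in (0%VS : {vspace V}).
    apply: (swap_sub gL1 gK _ wL1 kK) => u v uL vK.
    by rewrite wk // mem0v.
  rewrite brDl; move: bkw; rewrite memv0 => /eqP ->; rewrite addr0.
  have [a0 [a1 [a0L a1L ha0 ha1 ->]]] := graded_dec gL0 aL.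
  have [w0 [w1 [w0L w1L hw0 hw1 ->]]] := graded_dec gL1 wL1.
  have Q s r u v : hom s u -> hom r v -> u \in L0 -> v \in L1s -> br u v \in L1s.
    move=> hu hv uL /memL1s[vL vC]; apply/memL1s; split; first exact: L0_br.
    move=> y; have e := jacobi y hu hv.
    rewrite -[br (br u v) y](addrK (((-1) ^+ (s && r)) *: br v (br u y))) -e.
    by apply: memvB; [apply: L0_br | apply: memvZ].
  rewrite !brDl !brDr; apply: memvD; apply: memvD.
  - exact: (Q false false).
  - exact: (Q false true).
  - exact: (Q true false).
  - exact: (Q true true).
have L10 : L1s = 0%VS by apply: trans; [exact: iL1 | exact: capvSl].
have : x0 \in L1s by apply/memL1s.
by rewrite L10 memv0 (negbTE nx0).
Qed.

Lemma abelian_zero (J : {vspace V}) : is_ideal Vev Vod br J ->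
  brsp br J J = 0%VS -> J = 0%VS.
Proof.
move=> iJ ab; have [->|nz] := eqVneq J 0%VS; first by [].
exfalso; apply: (key iJ nz); apply: (cap_ideal iJ iJ nz) => m k mJ kJ.
by have := br_in_brsp mJ kJ; rewrite ab memv0 => /eqP.
Qed.

Lemma semisimple_pf : semisimple Vev Vod br.
Proof.
move=> I iI [k dk].
have H n m : derived br (n + m) I = 0%VS -> derived br m I = 0%VS.
  elim: n m => [|n IH] m //; rewrite addSnnS => /IH /= d.
  exact: abelian_zero (derived_ideal m iI) d.
by apply: (H k 0); rewrite addn0.
Qed.

Lemma notdirect : ~ direct_sum_of_two_nonzero_ideals Vev Vod br.
Proof.
case=> I [J [iI iJ nzI nzJ [dir _]]].
apply: (key iI nzI); apply: (cap_ideal iI iJ nzJ) => m k mJ kI.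
have : br m k \in (I :&: J)%VS by rewrite memv_cap iI.2 // ideal_right.
by rewrite (directv_addP dir) memv0 => /eqP.
Qed.

End Basics.

Local Open Scope complex_scope.

Theorem corollary2p2 (R : realType) (V : vectType R[i])
    (Vev Vod : {vspace V}) (br : V -> V -> V) (L0 : {vspace V}) :
  is_lie_superalgebra Vev Vod br ->
  nonlinear_primitive Vev Vod br L0 ->
  semisimple Vev Vod br /\ ~ direct_sum_of_two_nonzero_ideals Vev Vod br.
Proof.
move=> HL NP; split; [exact: (semisimple_pf HL NP) | exact: (notdirect HL NP)].
Qed.
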